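(* Let $X$ be a connected, locally compact Polish space with a partial order $\le$ whose strict part is $<$, and suppose there is $M\subseteq X$ such that: (i) $M$ has at least two elements, is connected, and is totally ordered by $<$; (ii) for every $m\in M$ and every neighborhood $U$ of $m$ in $X$ there are $\underline m,\overline m\in M$ with $m\in[\underline m,\overline m]\subseteq U$, where moreover $\overline m$ can be chosen with $m<\overline m$ if $m$ is not the largest element of $M$, and $\underline m$ can be chosen with $\underline m<m$ if $m$ is not the smallest element of $M$; (iii) for every bounded sequence $(x_n)$ in $X$ there are $\underline m,\overline m\in M$ with $\underline m\le x_n\le\overline m$ for all sufficiently large $n$. Let $\mathcal{U}$ be the set of continuous strictly increasing functions $X\to\mathbb{R}$ with the topology of uniform convergence on compact sets, and $\mathcal{R}^{\mathrm{mon}}$ the set of continuous strictly monotone preferences on $X$ with the topology of closed convergence. Define $\Phi:\mathcal{U}\to\mathcal{R}^{\mathrm{mon}}$ by $x\mathrel{\Phi(u)}y$ iff $u(x)\ge u(y)$. Then $\Phi$ is an open map.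
   Context: $[\underline m,\overline m]=\{z\in X:\underline m\le z\le\overline m\}$. A function $u$ is strictly increasing if $x<y$ implies $u(x)<u(y)$. A preference is a complete transitive binary relation; continuous if closed in $X\times X$; strictly monotone if $y<x$ implies $x\succ y$. Closed convergence on closed subsets of $X\times X$: $F^n\to F$ iff $F$ equals both the set of points every neighborhood of which meets $F^n$ for all large $n$, and the set of points every neighborhood of which meets $F^n$ for infinitely many $n$. Boundedness in (iii) refers to a metric compatible with the topology of $X$. *)

(* Defs.v *)
From HB Require Import structures.
From mathcomp Require Import all_boot all_order all_algebra.
From mathcomp Require Import all_classical all_reals all_analysis.
From mathcomp Require Import Rstruct Rstruct_topology.
From Stdlib Require Import Rdefinitions.
Import Order.TTheory GRing.Theory Num.Theory.
Set Implicit Arguments. Unset Strict Implicit. Unset Printing Implicit Defensive.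
Local Open Scope classical_set_scope.
Local Open Scope ring_scope.

Section Defs.
Variable X : topologicalType.

Definition is_metric (d : X -> X -> R) : Prop :=
  (forall x y, d x y = 0 <-> x = y) /\ (forall x y, d x y = d y x) /\
  (forall x y z, d x z <= d x y + d y z).

Definition compatible_metric (d : X -> X -> R) : Prop :=
  is_metric d /\
  forall A : set X, open A <->
    (forall x, A x -> exists2 e : R, 0 < e & [set y | d x y < e] `<=` A).

Definition metric_complete (d : X -> X -> R) : Prop :=
  forall x : nat -> X,
    (forall e : R, 0 < e -> exists N : nat, forall m n, leq N m -> leq N n ->
        d (x m) (x n) < e) ->
    exists l : X, x n @[n --> \oo] --> l.

Definition separable_space : Prop :=
  exists D : set X, countable D /\ closure D = setT.

Definition polish_space : Prop :=
  separable_space /\ exists d, compatible_metric d /\ metric_complete d.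

Definition bounded_seq (d : X -> X -> R) (x : nat -> X) : Prop :=
  exists x0 (r : R), forall n, d x0 (x n) <= r.

Definition partial_order (le : X -> X -> Prop) : Prop :=
  (forall x, le x x) /\ (forall x y, le x y -> le y x -> x = y) /\
  (forall x y z, le x y -> le y z -> le x z).

Definition lt_of (le : X -> X -> Prop) (x y : X) : Prop := le x y /\ x <> y.

Definition order_interval (le : X -> X -> Prop) (a b : X) : set X :=
  [set z | le a z /\ le z b].

Definition strictly_increasing (le : X -> X -> Prop) (u : X -> R) : Prop :=
  forall x y, lt_of le x y -> u x < u y.

Definition Uset (le : X -> X -> Prop) : set (X -> R) :=
  [set u | continuous u /\ strictly_increasing le u].

Definition U_open (le : X -> X -> Prop) (O : set (X -> R)) : Prop :=
  O `<=` Uset le /\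
  forall u, O u -> exists K : set X, compact K /\
    exists2 e : R, 0 < e &
      forall v, Uset le v -> (forall x, K x -> `|v x - u x| < e) -> O v.

(* preferences as subsets of X * X (x pref y iff (x,y) in P) *)
Definition preference (P : set (X * X)) : Prop :=
  (forall x y, P (x, y) \/ P (y, x)) /\
  (forall x y z, P (x, y) -> P (y, z) -> P (x, z)).

Definition strict_pref (P : set (X * X)) (x y : X) : Prop :=
  P (x, y) /\ ~ P (y, x).

Definition Rmon (le : X -> X -> Prop) : set (set (X * X)) :=
  [set P | preference P /\ closed P /\
           forall x y, lt_of le y x -> strict_pref P x y].

Definition lower_limit (F : nat -> set (X * X)) : set (X * X) :=
  [set p | forall V, nbhs p V -> exists N : nat, forall n, leq N n -> F n `&` V !=set0].

Definition upper_limit (F : nat -> set (X * X)) : set (X * X) :=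
  [set p | forall V, nbhs p V -> forall N : nat, exists2 n, leq N n & F n `&` V !=set0].

Definition closed_conv (F : nat -> set (X * X)) (G : set (X * X)) : Prop :=
  G = lower_limit F /\ G = upper_limit F.

(* topology of closed convergence on Rmon, given by its convergent sequences
   (sequentially open sets; this space is metrizable) *)
Definition R_open (le : X -> X -> Prop) (S : set (set (X * X))) : Prop :=
  S `<=` Rmon le /\
  forall G, S G -> forall F : nat -> set (X * X), (forall n, Rmon le (F n)) ->
    closed_conv F G -> exists N : nat, forall n, leq N n -> S (F n).

Definition Phi (u : X -> R) : set (X * X) := [set p | u p.2 <= u p.1].

End Defs.

(* Main.v *)
Require Import Defs.
From HB Require Import structures.
From mathcomp Require Import all_boot all_order all_algebra.
From mathcomp Require Import all_classical all_reals all_analysis.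
From mathcomp Require Import Rstruct Rstruct_topology.
From Stdlib Require Import Rdefinitions.
From mathcomp Require Import lra.
Import Order.TTheory GRing.Theory Num.Theory.
Local Open Scope classical_set_scope.
Local Open Scope ring_scope.

Section Aux.
Variable X : topologicalType.
Variable le : X -> X -> Prop.
Variable M : set X.
Hypothesis po : partial_order le.
Hypothesis Mtot : forall a b, M a -> M b -> lt_of le a b \/ a = b \/ lt_of le b a.
Hypothesis Mconn : connected M.
Hypothesis Mbnd : forall x, exists ml mh, M ml /\ M mh /\ le ml x /\ le x mh.
Hypothesis Mloc : forall m, M m -> forall U, nbhs m U ->
     exists ml mh, M ml /\ M mh /\ order_interval le ml mh m /\
       order_interval le ml mh `<=` U /\
       ((exists z, M z /\ ~ le z m) -> lt_of le m mh) /\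
       ((exists z, M z /\ ~ le m z) -> lt_of le ml m).
Variable a0 : X.

Lemma le_trans' x y z : le x y -> le y z -> le x z.
Proof. by case: po => _ [_ h]; exact: h. Qed.

Lemma Q_refl {Q} : Rmon le Q -> forall x, Q (x, x).
Proof. by move=> [[tot _] _] x; case: (tot x x). Qed.

Lemma Q_trans {Q} : Rmon le Q -> forall {x y z}, Q (x, y) -> Q (y, z) -> Q (x, z).
Proof. by move=> [[_ tr] _]; exact: tr. Qed.

Lemma Q_tot {Q} : Rmon le Q -> forall x y, Q (x, y) \/ Q (y, x).
Proof. by move=> [[tot _] _]. Qed.

Lemma Q_sm {Q} : Rmon le Q -> forall {x y}, lt_of le y x -> strict_pref Q x y.
Proof. by move=> [_ [_ sm]]. Qed.

Lemma sp1 {Q : set (X * X)} {x y : X} : strict_pref Q x y -> Q (x, y).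
Proof. by case. Qed.

Lemma sp2 {Q : set (X * X)} {x y : X} : strict_pref Q x y -> ~ Q (y, x).
Proof. by case. Qed.

Lemma le_Q {Q} : Rmon le Q -> forall x y, le y x -> Q (x, y).
Proof.
move=> HQ x y lyx; case: (pselect (y = x)) => [->|ne]; first exact: Q_refl.
have h : lt_of le y x by split.
exact: sp1 (Q_sm HQ h).
Qed.

Lemma Q_M {Q} : Rmon le Q -> forall a b, M a -> M b -> Q (a, b) -> le b a.
Proof.
move=> HQ a b Ma Mb Qab; case: (Mtot _ _ Ma Mb) => [lab|[eab|[lba _]]] //.
- by have := sp2 (Q_sm HQ lab).
- by rewrite eab; case: po.
Qed.

Definition indiff Q x m := M m /\ Q (m, x) /\ Q (x, m).

Lemma cont_pairl (y : X) : continuous (fun m : X => (m, y)).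
Proof. by move=> m; apply: cvg_pair; [exact: cvg_id | exact: cvg_cst]. Qed.

Lemma cont_pairr (y : X) : continuous (fun m : X => (y, m)).
Proof. by move=> m; apply: cvg_pair; [exact: cvg_cst | exact: cvg_id]. Qed.

Lemma indiff_ex {Q} : Rmon le Q -> forall x, exists m, indiff Q x m.
Proof.
move=> HQ x; have [ml [mh [Mml [Mmh [lml lmh]]]]] := Mbnd x.
apply: contrapT => nex.
have clQ : closed Q by case: HQ => _ [].
pose A := [set m | Q (m, x) /\ ~ Q (x, m)].
pose B := [set m | Q (x, m) /\ ~ Q (m, x)].
have cl1 : closed [set m | Q (m, x)].
  exact: (proj1 (continuous_closedP _) (cont_pairl x) Q clQ).
have cl2 : closed [set m | Q (x, m)].
  exact: (proj1 (continuous_closedP _) (cont_pairr x) Q clQ).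
have sep : separated A B.
  split; apply/seteqP; split => // m [].
  - move=> cAm [_ nQ]; apply: nQ.
    have sub : A `<=` [set m | Q (m, x)] by move=> ? [].
    by have := closureS sub cAm; rewrite -(proj1 (closure_id _) cl1).
  - move=> [_ nQ] cBm; apply: nQ.
    have sub : B `<=` [set m | Q (x, m)] by move=> ? [].
    by have := closureS sub cBm; rewrite -(proj1 (closure_id _) cl2).
have cov : M `<=` A `|` B.
  move=> m Mm.
  case: (pselect (Q (m, x))) => h1; case: (pselect (Q (x, m))) => h2.
  - by exfalso; apply: nex; exists m.
  - by left.
  - by right.
  - by case: (Q_tot HQ m x).
case: (connected_subset sep cov Mconn) => sub.
- by have [_ []] := sub _ Mml; exact: le_Q.
- by have [_ []] := sub _ Mmh; exact: le_Q.
Qed.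

Definition mch Q x := xget a0 (indiff Q x).

Lemma mchP {Q} : Rmon le Q -> forall x, indiff Q x (mch Q x).
Proof. by move=> HQ x; apply: xgetPex; exact: indiff_ex. Qed.

Lemma mch_lt {Q x mh} : Rmon le Q -> M mh -> ~ Q (x, mh) -> lt_of le (mch Q x) mh.
Proof.
move=> HQ Mmh nQ; have [Mm [Qmx Qxm]] := mchP HQ x.
case: (Mtot _ _ Mm Mmh) => [//|[emh|lmh]].
- by rewrite emh in Qxm.
- by exfalso; apply: nQ; apply: (Q_trans HQ Qxm); exact: sp1 (Q_sm HQ lmh).
Qed.

Lemma mch_gt {Q x ml} : Rmon le Q -> M ml -> ~ Q (ml, x) -> lt_of le ml (mch Q x).
Proof.
move=> HQ Mml nQ; have [Mm [Qmx Qxm]] := mchP HQ x.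
case: (Mtot _ _ Mml Mm) => [//|[eml|lml]].
- by rewrite eml in nQ.
- by exfalso; apply: nQ; apply: (Q_trans HQ _ Qmx); exact: sp1 (Q_sm HQ lml).
Qed.

Lemma local {Y : Type} (G : Y -> set (X * X)) (pt : Y -> X) (FF : set_system Y)
  {FFf : Filter FF} : (forall y, Rmon le (G y)) -> forall m0 U,
  M m0 -> nbhs m0 U ->
  (forall mh, M mh -> lt_of le m0 mh -> \forall y \near FF, ~ G y (pt y, mh)) ->
  (forall ml, M ml -> lt_of le ml m0 -> \forall y \near FF, ~ G y (ml, pt y)) ->
  \forall y \near FF, U (mch (G y) (pt y)).
Proof.
move=> HG m0 U Mm0 Um0 Hhi Hlo.
have [ml [mh [Mml [Mmh [[lml lmh] [sub [Hh Hl]]]]]]] := Mloc _ Mm0 _ Um0.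
have Ehi : \forall y \near FF, le (mch (G y) (pt y)) mh.
  case: (pselect (exists z, M z /\ ~ le z m0)) => [ex|nex].
  - apply: filterS (Hhi mh Mmh (Hh ex)) => y ny.
    exact: (mch_lt (HG y) Mmh ny).1.
  - apply: filterE => y; apply: (@le_trans' _ m0 _ _ lmh).
    apply: contrapT => nle; apply: nex; exists (mch (G y) (pt y)); split => //.
    by have [] := mchP (HG y) (pt y).
have Elo : \forall y \near FF, le ml (mch (G y) (pt y)).
  case: (pselect (exists z, M z /\ ~ le m0 z)) => [ex|nex].
  - apply: filterS (Hlo ml Mml (Hl ex)) => y ny.
    exact: (mch_gt (HG y) Mml ny).1.
  - apply: filterE => y; apply: (@le_trans' _ m0 _ lml).
    apply: contrapT => nle; apply: nex; exists (mch (G y) (pt y)); split => //.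
    by have [] := mchP (HG y) (pt y).
by apply: filterS2 Elo Ehi => y h1 h2; apply: sub; split.
Qed.


Lemma mch_cont {Q} : Rmon le Q -> continuous (mch Q).
Proof.
move=> HQ x0 U Um.
have [Mm0 [Qm0x Qxm0]] := mchP HQ x0.
have clQ : closed Q by case: HQ => _ [].
apply: (@local X (fun _ => Q) id (nbhs x0) _ (fun _ => HQ) (mch Q x0) U Mm0 Um).
- move=> mh Mmh lt0.
  have nQ : ~ Q (x0, mh).
    by move=> Qx; apply: (sp2 (Q_sm HQ lt0)); exact: (Q_trans HQ Qm0x Qx).
  exact: (cont_pairl mh x0 (~` Q) (open_nbhs_nbhs (conj (closed_openC clQ) nQ))).
- move=> ml Mml lt0.
  have nQ : ~ Q (ml, x0).
    by move=> Qx; apply: (sp2 (Q_sm HQ lt0)); exact: (Q_trans HQ Qx Qxm0).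
  exact: (cont_pairr ml x0 (~` Q) (open_nbhs_nbhs (conj (closed_openC clQ) nQ))).
Qed.

Definition vQ (u : X -> R) Q x := u (mch Q x).

Lemma vQ_U u Q : Uset le u -> Rmon le Q -> Uset le (vQ u Q).
Proof.
move=> [cu su] HQ; split.
- move=> x; exact (continuous_comp (mch_cont HQ x) (cu _)).
- move=> x y lxy; rewrite /vQ; apply: su.
  apply: (mch_gt HQ (proj1 (mchP HQ x))) => Q1.
  have [_ [_ Qxm]] := mchP HQ x.
  by apply: (sp2 (Q_sm HQ lxy)); exact: (Q_trans HQ Qxm Q1).
Qed.

Lemma vQ_Phi u Q : strictly_increasing le u -> Rmon le Q -> Phi (vQ u Q) = Q.
Proof.
move=> su HQ; apply/seteqP; split => -[x y]; rewrite /Phi /vQ /=;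
  have [Mx [Qmx Qxm]] := mchP HQ x; have [My [Qmy Qym]] := mchP HQ y.
- move=> h; apply: (Q_trans HQ Qxm); apply: (Q_trans HQ _ Qmy).
  apply: (le_Q HQ).
  case: (Mtot _ _ Mx My) => [lt|[e|[l _]]] //.
  + by have := su _ _ lt; rewrite ltNge h.
  + by rewrite e; case: po.
- move=> Qxy.
  have Qm : Q (mch Q x, mch Q y) := Q_trans HQ Qmx (Q_trans HQ Qxy Qym).
  have lm := Q_M HQ _ _ Mx My Qm.
  case: (pselect (mch Q y = mch Q x)) => [->//|ne].
  have h : lt_of le (mch Q y) (mch Q x) by split.
  exact: ltW (su _ _ h).
Qed.

Lemma Phi_Rmon {u} : Uset le u -> Rmon le (Phi u).
Proof.
move=> [cu su]; split; [split|split].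
- move=> x y; rewrite /Phi /=; case/orP: (le_total (u x) (u y)); [right|left] => //.
- by move=> x y z /= h1 h2; exact: le_trans h2 h1.
- have -> : Phi u = (fun p : X * X => u p.2 - u p.1) @^-1` [set r : R | r <= 0].
    by apply/seteqP; split => p /=; rewrite subr_le0.
  have cf : continuous (fun p : X * X => u p.2 - u p.1).
    move=> [a b].
    have h2 : (fun p : X * X => u p.2) @ (a, b) --> u b.
      by apply: cvg_comp; [exact: cvg_snd | exact: cu].
    have h1 : (fun p : X * X => u p.1) @ (a, b) --> u a.
      by apply: cvg_comp; [exact: cvg_fst | exact: cu].
    exact (@cvgB R R^o _ _ _ _ _ _ _ h2 h1).
  exact (proj1 (@continuous_closedP _ _ _) cf _ (@closed_le R 0)).
- move=> x y lyx; have h := su _ _ lyx.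
  by split => /=; [exact: ltW | rewrite /Phi /= leNgt h].
Qed.

Lemma conv u (F : nat -> set (X * X)) (K : set X) (e : R) : Uset le u ->
  (forall n, Rmon le (F n)) -> upper_limit F `<=` Phi u -> compact K -> 0 < e ->
  exists N : nat, forall n : nat, leq N n -> forall x, K x -> `|vQ u (F n) x - u x| < e.
Proof.
move=> Uu HF sub cK e0.
have HP := Phi_Rmon Uu; have [cu su] := Uu.
have H : \forall n \near \oo, K `<=` (fun x => `|vQ u (F n) x - u x| < e).
  apply: (proj1 (compact_near_coveringP K) cK) => x0 Kx0.
  have [Mm0 [P1 P2]] := mchP HP x0.
  set m0 := mch (Phi u) x0 in Mm0 P1 P2 *.
  have um : u m0 = u x0.
    by apply/eqP; rewrite eq_le; apply/andP; split; [exact: P2 | exact: P1].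
  have e2 : 0 < e / 2 by rewrite divr_gt0.
  have Um : nbhs m0 [set z | `|u x0 - u z| < e / 2].
    have h : nbhs m0 (u @^-1` ball (u m0) (e / 2)) := cu m0 _ (nbhsx_ballx (u m0) (e / 2) e2).
    by apply: (filterS _ h) => z /=; rewrite /ball /= um.
  have Cx : \forall x' \near x0, `|u x0 - u x'| < e / 2.
    have h : nbhs x0 (u @^-1` ball (u x0) (e / 2)) := cu x0 _ (nbhsx_ballx (u x0) (e / 2) e2).
    by apply: (filterS _ h) => z /=; rewrite /ball /=.
  have L := @local (X * nat)%type (fun y => F y.2) (fun y => y.1)
    (filter_prod (nbhs x0) \oo) _ (fun y => HF y.2) m0 _ Mm0 Um.
  have L' : \forall y \near filter_prod (nbhs x0) \oo,
      `|u x0 - u (mch (F y.2) y.1)| < e / 2.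
    apply: L.
    - move=> mh Mmh lt0.
      have nP : ~ upper_limit F (x0, mh).
        by move=> /sub /= h; have := su _ _ lt0; rewrite um ltNge h.
      have [V [nV [N HN]]] : exists V, nbhs (x0, mh) V /\
          exists N : nat, forall n, leq N n -> ~ (F n `&` V !=set0).
        apply: contrapT => hc; apply: nP => V nV N; apply: contrapT => hn.
        apply: hc; exists V; split => //; exists N => n Nn hne; apply: hn.
        by exists n.
      exists ([set x' | V (x', mh)], [set n | leq N n]).
        by split; [exact: (cont_pairl mh x0 V nV) | exact: nbhs_infty_ge].
      move=> [x' n] /= [Vx Nn] Fx; apply: (HN n Nn).
      by exists (x', mh); split.
    - move=> ml Mml lt0.
      have nP : ~ upper_limit F (ml, x0).
        by move=> /sub /= h; have := su _ _ lt0; rewrite um ltNge h.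
      have [V [nV [N HN]]] : exists V, nbhs (ml, x0) V /\
          exists N : nat, forall n, leq N n -> ~ (F n `&` V !=set0).
        apply: contrapT => hc; apply: nP => V nV N; apply: contrapT => hn.
        apply: hc; exists V; split => //; exists N => n Nn hne; apply: hn.
        by exists n.
      exists ([set x' | V (ml, x')], [set n | leq N n]).
        by split; [exact: (cont_pairr ml x0 V nV) | exact: nbhs_infty_ge].
      move=> [x' n] /= [Vx Nn] Fx; apply: (HN n Nn).
      by exists (ml, x'); split.
  have C2 : filter_prod (nbhs x0) \oo (fun p : X * nat => `|u x0 - u p.1| < e / 2).
    exists ([set x' | `|u x0 - u x'| < e / 2], setT) => /=.
      by split => //; exact: filterT.
    by move=> [a b] [].
  suff : filter_prod (nbhs x0) \oo
      (fun p : X * nat => `|vQ u (F p.2) p.1 - u p.1| < e) by [].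
  have pw : forall p : X * nat, `|u x0 - u p.1| < e / 2 ->
      `|u x0 - u (mch (F p.2) p.1)| < e / 2 -> `|vQ u (F p.2) p.1 - u p.1| < e.
    move=> [x' n] /= h1 h2.
    rewrite /vQ; rewrite ltr_norml in h1; rewrite ltr_norml in h2; rewrite ltr_norml.
    move/andP: h1 => [h1 h1']; move/andP: h2 => [h2 h2'].
    by apply/andP; split; lra.
  exact (filterS2 _ pw C2 L').
move: H => [N _ HN]; exists N => n Nn x Kx; exact: HN n Nn x Kx.
Qed.


Lemma main O : U_open le O -> R_open le (@Phi X @` O).
Proof.
move=> [OU Oopen]; split.
- by move=> P [u Ou <-]; apply: Phi_Rmon; exact: OU.
- move=> P [u Ou <-] F HF [_ Hup].
  have [K [cK [e e0 He]]] := Oopen u Ou.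
  have sub : upper_limit F `<=` Phi u by rewrite -Hup.
  have [N HN] := conv _ _ _ _ (OU u Ou) HF sub cK e0.
  exists N => n Nn; exists (vQ u (F n)); last exact: (vQ_Phi _ _ (OU u Ou).2 (HF n)).
  apply: He; first exact: (vQ_U _ _ (OU u Ou) (HF n)).
  exact: HN.
Qed.

End Aux.


Theorem theorem8 (X : topologicalType) (le : X -> X -> Prop) (M : set X)
  (d : X -> X -> R) :
  connected [set: X] ->
  locally_compact [set: X] ->
  polish_space X ->
  compatible_metric d ->
  partial_order le ->
  (* (i) *)
  (exists a b, M a /\ M b /\ a <> b) ->
  connected M ->
  (forall a b, M a -> M b -> lt_of le a b \/ a = b \/ lt_of le b a) ->
  (* (ii) *)
  (forall m, M m -> forall U, nbhs m U ->
     exists ml mh, M ml /\ M mh /\ order_interval le ml mh m /\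
       order_interval le ml mh `<=` U /\
       ((exists z, M z /\ ~ le z m) -> lt_of le m mh) /\
       ((exists z, M z /\ ~ le m z) -> lt_of le ml m)) ->
  (* (iii) *)
  (forall x : nat -> X, bounded_seq d x ->
     exists ml mh, M ml /\ M mh /\
       exists N : nat, forall n, leq N n -> le ml (x n) /\ le (x n) mh) ->
  forall O : set (X -> R), U_open le O -> R_open le (@Phi X @` O).
Proof.
move=> _ _ _ _ po [a0 [b0 [Ma0 _]]] Mconn Mtot Mloc Mbnd O HO.
have Mbnd' : forall x, exists ml mh, M ml /\ M mh /\ le ml x /\ le x mh.
  move=> x; have [|ml [mh [Mml [Mmh [N HN]]]]] := Mbnd (fun _ => x).
    by exists x, (d x x) => n.
  by exists ml, mh; have [] := HN N (leqnn N).
exact (main _ _ _ po Mtot Mconn Mbnd' Mloc a0 _ HO).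
Qed.
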